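(* Let $n\ge2$, $\sigma\in\mathrm{NC}_n$ and $1\le i<n$. Then $\sigma s_i\in\mathrm{NC}_n$ if and only if $i\in\{\sigma(i),\sigma(i+1)\}$.
   Context: $s_i=(i,i+1)$ and $\sigma s_i$ denotes the composition $\sigma\circ s_i$. A set partition of $[n]$ is noncrossing if there are no distinct blocks $P,Q$ with $a,b\in P$, $c,d\in Q$, $a<c<b<d$. To a noncrossing partition associate the permutation $\sigma\in S_n$ which on each block $\{a_1<\dots<a_p\}$ acts by $\sigma(a_j)=a_{j-1}$ ($j\ge2$) and $\sigma(a_1)=a_p$. $\mathrm{NC}_n$ is the set of such permutations (noncrossing permutations); their cycles are the blocks. *)

(* Defs.v *)
(* [n] = {1,...,n} is modelled by 'I_n = {0,...,n-1}
   (order-preserving shift by one). *)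
From mathcomp Require Import all_boot all_order all_fingroup.
Set Implicit Arguments. Unset Strict Implicit. Unset Printing Implicit Defensive.

Definition set_partition (n : nat) (P : {set {set 'I_n}}) : Prop :=
  partition P [set: 'I_n].

Definition noncrossing (n : nat) (P : {set {set 'I_n}}) : Prop :=
  forall B C, B \in P -> C \in P -> B != C ->
  ~ exists a b c d : 'I_n,
      [/\ a \in B, b \in B, c \in C & d \in C] /\
      [/\ (a < c)%N, (c < b)%N & (b < d)%N].

(* y is the image of x under the permutation associated to the block B
   containing x: on B = {a_1 < ... < a_p}, a_j |-> a_{j-1} (j >= 2) and
   a_1 |-> a_p. *)
Definition block_image (n : nat) (B : {set 'I_n}) (x y : 'I_n) : Prop :=
  y \in B /\
  ((exists2 z, z \in B & (z < x)%N) ->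
     (y < x)%N /\ forall z, z \in B -> (z < x)%N -> (z <= y)%N) /\
  (~ (exists2 z, z \in B & (z < x)%N) ->
     forall z, z \in B -> (z <= y)%N).

Definition perm_of_partition (n : nat) (P : {set {set 'I_n}})
  (sigma : {perm 'I_n}) : Prop :=
  forall x : 'I_n, block_image (pblock P x) x (sigma x).

Definition NC (n : nat) (sigma : {perm 'I_n}) : Prop :=
  exists P : {set {set 'I_n}},
    [/\ set_partition P, noncrossing P & perm_of_partition P sigma].

(* Main.v *)
Require Import Defs.
From mathcomp Require Import all_boot all_order all_fingroup.
From mathcomp Require Import zify.
Set Implicit Arguments. Unset Strict Implicit. Unset Printing Implicit Defensive.

Definition cyc (y z x : nat) : Prop :=
  (y < x /\ y < z /\ z < x)%N \/ (x <= y /\ (z < x \/ y < z))%N.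

Lemma bimP n (S : {set 'I_n}) x y :
  block_image S x y <-> (y \in S /\ forall z, z \in S -> ~ cyc y z x).
Proof.
rewrite /block_image /cyc; split.
- move=> [yS [H1 H2]]; split=> // z zS.
  case: (boolP [exists z, (z \in S) && (z < x)%N]).
  + move/existsP=> [w /andP[wS wx]].
    have [yx Hz] := H1 (ex_intro2 _ _ w wS wx).
    have := Hz z zS. lia.
  + move/existsPn=> hn.
    have hn' : ~ (exists2 z, z \in S & (z < x)%N).
      by move=> [w wS wx]; have := hn w; rewrite wS wx.
    have := H2 hn' z zS. have := hn y; rewrite yS /=.
    have := hn z; rewrite zS /=. lia.
- move=> [yS Hc]; split=> //; split.
  + move=> [w wS wx]. have := Hc w wS.
    move=> hw; split; first lia.
    move=> z zS zx; have := Hc z zS; lia.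
  + move=> hn z zS.
    have yx : (x <= y)%N.
      by rewrite leqNgt; apply/negP=> yx; apply: hn; exists y.
    have := Hc z zS; lia.
Qed.

Definition goodR n (R : rel 'I_n) (s : {perm 'I_n}) : Prop :=
  [/\ forall x, R x x, forall x y, R x y -> R y x,
      forall x y z, R x y -> R y z -> R x z,
      forall a b c d : 'I_n, (a < c)%N -> (c < b)%N -> (b < d)%N ->
           R a b -> R c d -> R a c &
      forall x, R x (s x) /\ forall z, R x z -> ~ cyc (s x) z x].

Lemma NC_goodR n (s : {perm 'I_n}) : NC s <-> exists R, goodR R s.
Proof.
split.
- move=> [P [hp hnc hperm]].
  have /and3P[/eqP hcov htriv _] := hp.
  have memP x : x \in pblock P x by rewrite mem_pblock hcov inE.
  have eqP' x y : (y \in pblock P x) = (pblock P x == pblock P y).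
    by rewrite eq_pblock // hcov inE.
  exists (fun x y => y \in pblock P x); split.
  + exact: memP.
  + by move=> x y; rewrite !eqP' eq_sym.
  + by move=> x y z; rewrite !eqP' => /eqP-> .
  + move=> a b c d ac cb bd hab hcd.
    apply/negPn/negP => hac; apply: (hnc (pblock P a) (pblock P c)).
    * by apply: pblock_mem; rewrite hcov inE.
    * by apply: pblock_mem; rewrite hcov inE.
    * by rewrite -eqP'.
    * exists a, b, c, d; split; split=> //; exact: memP.
  + move=> x; have /bimP [h1 h2] := hperm x; split=> //.
- move=> [R [Rr Rs Rt Rnc Rim]].
  have eqi : {in [set: 'I_n] & &, equivalence_rel R}.
    move=> x y z _ _ _; split=> // hxy; apply/idP/idP.
    + by move=> hxz; apply: Rt (Rs _ _ hxy) hxz.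
    + by move=> hyz; apply: Rt hxy hyz.
  have hp := equivalence_partitionP eqi.
  have hpb := pblock_equivalence_partition eqi.
  have /and3P[/eqP hcov htriv _] := hp.
  exists (equivalence_partition R [set: 'I_n]); split => //.
  + move=> B C BP CP BC [a [b [c [d [[aB bB cB dB] [ac cb bd]]]]]].
    have eB := def_pblock htriv BP aB.
    have eC := def_pblock htriv CP cB.
    have hab : R a b by rewrite -hpb ?inE // eB.
    have hcd : R c d by rewrite -hpb ?inE // eC.
    have hac := Rnc _ _ _ _ ac cb bd hab hcd.
    have : c \in B by rewrite -eB hpb ?inE.
    move=> cB'; move: BC; rewrite -eC -(def_pblock htriv BP cB').
    by rewrite eqxx.
  + move=> x; apply/bimP; have [h1 h2] := Rim x; split.
    * by rewrite hpb ?inE.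
    * by move=> z; rewrite hpb ?inE //; apply: h2.
Qed.

Definition cross (p q u v : nat) : Prop :=
  (p < u /\ u < q /\ q < v)%N \/ (p < v /\ v < q /\ q < u)%N \/
  (q < u /\ u < p /\ p < v)%N \/ (q < v /\ v < p /\ p < u)%N \/
  (u < p /\ p < v /\ v < q)%N \/ (u < q /\ q < v /\ v < p)%N \/
  (v < p /\ p < u /\ u < q)%N \/ (v < q /\ q < u /\ u < p)%N.

Lemma NC4 n (R : rel 'I_n) s (g : goodR R s) (p q u v : 'I_n) :
  R p q -> R u v -> ~ R p u -> ~ cross p q u v.
Proof.
case: g => Rr Rs Rt Rnc _ hpq huv hn.
have hqp := Rs _ _ hpq; have hvu := Rs _ _ huv.
case=> [[h1 [h2 h3]]|[[h1 [h2 h3]]|[[h1 [h2 h3]]|[[h1 [h2 h3]]|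
        [[h1 [h2 h3]]|[[h1 [h2 h3]]|[[h1 [h2 h3]]|[h1 [h2 h3]]]]]]]]];
  have := Rnc _ _ _ _ h1 h2 h3 ltac:(eassumption) ltac:(eassumption);
  move=> h; apply: hn; eauto.
Qed.

Lemma arith4 (a b c d : nat) : a <> b -> a <> c -> a <> d -> b <> d ->
  c <> d -> c = b.+1 -> cross a b c d \/ cross a c b d.
Proof.
move=> ab ac ad bd cd ce; rewrite /cross.
have [h1|h1] : (a < b \/ b.+1 < a)%N by lia.
- have [h2|h2] : (d < b \/ b.+1 < d)%N by lia.
  + have [h3|h3] : (a < d \/ d < a)%N by lia.
    * left; right; left. lia.
    * right; do 6 right; left; lia.
  + right; left; lia.
- have [h2|h2] : (d < b \/ b.+1 < d)%N by lia.
  + left; do 7 right; lia.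
  + have [h3|h3] : (a < d \/ d < a)%N by lia.
    * left; do 2 right; left; lia.
    * right; do 5 right; left; lia.
Qed.

Lemma ne_val n (a b : 'I_n) : a <> b -> (a : nat) <> b.
Proof. by move=> h /val_inj. Qed.

Lemma keyR n (R : rel 'I_n) s (g : goodR R s) (x x' : 'I_n) :
  (x' : nat) = x.+1 -> R x x' -> s x' = x.
Proof.
case: g => Rr Rs Rt _ Rim hx hxx.
have [h1 h2] := Rim x'.
have := h2 x (Rs _ _ hxx); rewrite /cyc => hc.
apply: val_inj => /=; lia.
Qed.

Lemma fwd n (RP RQ : rel 'I_n) (s t : {perm 'I_n}) (i i' : 'I_n)
  (hi' : (i' : nat) = i.+1) (gP : goodR RP s) (gQ : goodR RQ t)
  (ti : t i = s i') (ti' : t i' = s i) : i = s i \/ i = s i'.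
Proof.
case: (eqVneq i (s i)) => [e|h1]; first by left.
case: (eqVneq i (s i')) => [e|h2]; first by right.
exfalso.
have gP' := gP; have gQ' := gQ.
case: gP' => Pr Ps Pt Pnc Pim; case: gQ' => Qr Qs Qt Qnc Qim.
have nP : ~ RP i i'.
  by move=> h; move: h2; rewrite (keyR gP hi' h) eqxx.
have nQ : ~ RQ i i'.
  by move=> h; move: h1; rewrite -ti' (keyR gQ hi' h) eqxx.
have hab : RP (s i) i by apply: Ps; case: (Pim i).
have hcd : RP i' (s i') by case: (Pim i').
have hac : RQ (s i) i' by rewrite -ti'; apply: Qs; case: (Qim i').
have hbd : RQ i (s i') by rewrite -ti; case: (Qim i).
have ab : (s i : nat) <> i by apply: ne_val => e; move: h1; rewrite e eqxx.
have cd : (i' : nat) <> s i'.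
  apply: ne_val => e; apply: nQ; by rewrite e.
have ac : (s i : nat) <> i'.
  apply: ne_val => e; apply: nP; by apply: Pt (Ps _ _ hab) _; rewrite e.
have bd : (i : nat) <> s i'.
  apply: ne_val => e; apply: nP; by rewrite {1}e; apply: Ps.
have ad : (s i : nat) <> s i'.
  apply: ne_val => e; apply: nP; apply: Pt (Ps _ _ hab) _; rewrite e; exact: Ps.
case: (arith4 ab ac ad bd cd hi') => hc.
- apply: (NC4 gP hab hcd _ hc) => h; apply: nP.
  apply: Pt (Ps _ _ hab) h.
- apply: (NC4 gQ hac hbd _ hc) => h; apply: nQ.
  exact: Qt (Qs _ _ h) hac.
Qed.

Lemma tE n (s : {perm 'I_n}) (i i' x : 'I_n) :
  (tperm i i' * s)%g x = s (tperm i i' x).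
Proof. by rewrite permM. Qed.

Lemma bwd1 n (RP : rel 'I_n) (s : {perm 'I_n}) (i i' : 'I_n)
  (hi' : (i' : nat) = i.+1) (gP : goodR RP s) (e : s i' = i) :
  goodR (fun x y => RP x y && ((x == i) == (y == i))) (tperm i i' * s)%g.
Proof.
have gP' := gP; case: gP' => Pr Ps Pt Pnc Pim.
have ii' : i != i' by apply/eqP => h; move: hi'; rewrite h; lia.
have Pii' : RP i i'.
  by apply: Ps; have [+ _] := Pim i'; rewrite e.
split.
- by move=> x; rewrite Pr eqxx.
- by move=> x y /andP[h1 /eqP h2]; rewrite (Ps _ _ h1) h2 eqxx.
- move=> x y z /andP[h1 /eqP h2] /andP[h3 /eqP h4].
  by rewrite (Pt _ _ _ h1 h3) h2 h4 eqxx.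
- move=> a b c d ac cb bd /andP[h1 /eqP h2] /andP[h3 /eqP h4].
  rewrite (Pnc _ _ _ _ ac cb bd h1 h3) /=.
  have ai : (a == i) = false.
    apply/negP => /eqP ea; move: h2; rewrite ea eqxx => /esym/eqP eb.
    move: cb ac; rewrite eb ea; lia.
  have ci : (c == i) = false.
    apply/negP => /eqP ea; move: h4; rewrite ea eqxx => /esym/eqP eb.
    move: bd cb; rewrite eb ea; lia.
  by rewrite ai ci.
- move=> x; rewrite tE.
  case: (eqVneq x i) => [->|xi].
  + rewrite tpermL e eqxx /=; split; first by rewrite Pr.
    move=> z /andP[_ /eqP /esym/eqP ->]; rewrite /cyc; lia.
  case: (eqVneq x i') => [->|xi'].
  + rewrite tpermR.
    have sii : s i != i.
      by apply/eqP => h; move/eqP: ii'; apply; apply: (@perm_inj _ s); rewrite h e.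
    have [h1 h2] := Pim i.
    rewrite (negbTE sii) /=; split.
      by rewrite (Pt _ _ _ (Ps _ _ Pii') h1).
    move=> z /andP[hz hzi].
    have zi : z != i by move: hzi; case: (z == i).
    have hz' : RP i z by exact: Pt Pii' hz.
    have := h2 z hz'; rewrite /cyc.
    have := ne_val (elimN eqP zi); have := ne_val (elimN eqP sii). lia.
    rewrite tpermD 1?eq_sym //.
    have [h1 h2] := Pim x; split.
      have sxi : s x != i.
        apply/eqP => hx; move/eqP: xi'; apply; apply: (@perm_inj _ s).
        by rewrite hx e.
      by rewrite h1 (negbTE sxi).
    by move=> z /andP[hz _]; apply: h2.
Qed.

Definition Mz n (RP : rel 'I_n) (i' i z : 'I_n) := RP i' z || (z == i).
Arguments Mz : simpl never.

Lemma bwd2 n (RP : rel 'I_n) (s : {perm 'I_n}) (i i' : 'I_n)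
  (hi' : (i' : nat) = i.+1) (gP : goodR RP s) (e : s i = i) :
  goodR (fun x y => RP x y || (Mz RP i' i x && Mz RP i' i y))
        (tperm i i' * s)%g.
Proof.
have gP' := gP; case: gP' => Pr Ps Pt Pnc Pim.
have ii' : i != i' by apply/eqP => h; move: hi'; rewrite h; lia.
have Bs z : RP i z -> z = i.
  move=> hz; have [_ h2] := Pim i; have := h2 z hz; rewrite e /cyc => hc.
  apply: val_inj => /=; lia.
have nPii' : ~ RP i' i by move=> h; move: ii'; rewrite (Bs _ (Ps _ _ h)) eqxx.
have Mcl a b : RP a b -> Mz RP i' i a -> Mz RP i' i b.
  move=> hab /orP[h|/eqP h].
  - by rewrite /Mz (Pt _ _ _ h hab).
  - by rewrite /Mz (Bs b) ?eqxx ?orbT // -h.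
have MP z : Mz RP i' i z -> RP i' z \/ z = i by move=> /orP[|/eqP]; auto.
split.
- by move=> x; rewrite Pr.
- move=> x y /orP[h|/andP[h1 h2]]; first by rewrite (Ps _ _ h).
  by rewrite h1 h2 orbT.
- move=> x y z /orP[h|/andP[h1 h2]] /orP[h'|/andP[h3 h4]].
  + by rewrite (Pt _ _ _ h h').
  + by rewrite (Mcl y x (Ps _ _ h) h3) h4 orbT.
  + by rewrite (Mcl y z h' h2) h1 orbT.
  + by rewrite h1 h4 orbT.
- move=> a b c d ac cb bd.
    move=> /orP[hab|/andP[Ma Mb]] /orP[hcd|/andP[Mc Md]].
  + by rewrite (Pnc _ _ _ _ ac cb bd hab hcd).
  +
    case: (MP _ Mc) => [hc|ec].
    * case: (MP _ Md) => [hd|ed].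
      - by rewrite (Pnc _ _ _ _ ac cb bd hab (Pt _ _ _ (Ps _ _ hc) hd)).
      - have bi' : (b < i')%N by move: bd; rewrite ed hi'; lia.
        by rewrite (Pnc _ _ _ _ ac cb bi' hab (Ps _ _ hc)).
    * case: (MP _ Md) => [hd|ed]; last by move: cb bd; rewrite ec ed; lia.
      have bi : (i' <= b)%N by move: cb; rewrite ec hi'.
      case: (eqVneq b i') => [eb|bne].
      - by rewrite Mc /Mz; move: hab; rewrite eb => /Ps ->; rewrite /= orbT.
      - have i'b : (i' < b)%N.
          by move: bi bne; rewrite leq_eqVlt => /orP[/eqP/val_inj ->|]; rewrite ?eqxx.
        have ai' : (a < i')%N by move: ac; rewrite ec hi'; lia.
        have := Ps _ _ (Pnc _ _ _ _ ai' i'b bd hab hd).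
        by move=> h; rewrite Mc /Mz h /= orbT.
  +
    case: (MP _ Ma) => [ha|ea].
    * case: (MP _ Mb) => [hb|eb].
      - by rewrite (Pnc _ _ _ _ ac cb bd (Pt _ _ _ (Ps _ _ ha) hb) hcd).
      - have di : (i' <= d)%N by move: bd; rewrite eb hi'.
        case: (eqVneq d i') => [ed|dne].
        + by move: hcd; rewrite ed => /Ps h; rewrite Ma /Mz h /= orbT.
        + have i'd : (i' < d)%N.
            by move: di dne; rewrite leq_eqVlt => /orP[/eqP/val_inj ->|]; rewrite ?eqxx.
          have ci' : (c < i')%N by move: cb; rewrite eb hi'; lia.
          by rewrite (Pnc _ _ _ _ ac ci' i'd (Ps _ _ ha) hcd).
    * case: (MP _ Mb) => [hb|eb]; last by move: ac cb; rewrite ea eb; lia.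
      have ci : (i' <= c)%N by move: ac; rewrite ea hi'.
      case: (eqVneq c i') => [ec|cne].
      - by rewrite Ma /Mz ec Pr /= orbT.
      - have i'c : (i' < c)%N.
          by move: ci cne; rewrite leq_eqVlt => /orP[/eqP/val_inj ->|]; rewrite ?eqxx.
        by rewrite Ma /Mz (Pnc _ _ _ _ i'c cb bd hb hcd) /= orbT.
  + by rewrite Ma Mc orbT.
- move=> x; rewrite tE.
  case: (eqVneq x i) => [->|xi].
  + rewrite tpermL.
    have [h1 h2] := Pim i'.
    have si' : s i' != i by apply/eqP => h; apply: nPii'; rewrite -h.
    split; first by rewrite /Mz h1 eqxx !orbT.
    move=> z /orP[/Bs ->|/andP[_ /MP [hz|->]]].
    * rewrite /cyc; lia.
    * have := h2 z hz; have := ne_val (elimN eqP si'); rewrite /cyc; lia.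
    * rewrite /cyc; lia.
  case: (eqVneq x i') => [->|xi'].
  + rewrite tpermR e; split; first by rewrite /Mz Pr eqxx !orbT.
    move=> z _; rewrite /cyc; lia.
  + rewrite tpermD 1?eq_sym //.
    have [h1 h2] := Pim x; split; first by rewrite h1.
    move=> z /orP[hz|/andP[Mx Mz']]; first exact: h2.
    case: (MP _ Mx) => [hx|ex]; last by move: xi; rewrite ex eqxx.
    case: (MP _ Mz') => [hz|->].
    * exact: h2 (Pt _ _ _ (Ps _ _ hx) hz).
    * have := h2 i' (Ps _ _ hx); have := ne_val (elimN eqP xi').
      rewrite /cyc; lia.
Qed.

Theorem lemma7p4 (n : nat) (hn : (2 <= n)%N) (sigma : {perm 'I_n})
  (i i' : 'I_n) (hi' : nat_of_ord i' = (nat_of_ord i).+1) :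
  NC sigma ->
  (NC (tperm i i' * sigma)%g <-> (i = sigma i \/ i = sigma i')).
Proof.
move=> /NC_goodR [RP gP]; split.
- move=> /NC_goodR [RQ gQ]; apply: (fwd hi' gP gQ).
  + by rewrite tE tpermL.
  + by rewrite tE tpermR.
- move=> [e|e]; apply/NC_goodR; eexists.
  + exact: (bwd2 hi' gP (esym e)).
  + exact: (bwd1 hi' gP (esym e)).
Qed.
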